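(* Let $\mathbf A\in\mathbb C^{m\times n}$, $\mathbf W\in\mathbb C^{n\times m}$, $k=\max\{\operatorname{Ind}(\mathbf A\mathbf W),\operatorname{Ind}(\mathbf W\mathbf A)\}$ and $\operatorname{rank}(\mathbf A\mathbf W)^{k}=r$. Then the $\mathbf W$-weighted Drazin inverse $\mathbf A_{d,W}=(a^{d,W}_{ij})\in\mathbb C^{m\times n}$ satisfies, for all $i=1,\dots,m$ and $j=1,\dots,n$, \[ a^{d,W}_{ij}=\frac{\sum_{\beta\in J_{r,m}\{i\}}\left|\left((\mathbf A\mathbf W)^{k+2}_{.i}(\bar{\mathbf v}^{(k)}_{.j})\right)^{\beta}_{\beta}\right|}{\sum_{\beta\in J_{r,m}}\left|((\mathbf A\mathbf W)^{k+2})^{\beta}_{\beta}\right|} \] and \[ a^{d,W}_{ij}=\frac{\sum_{\alpha\in I_{r,n}\{j\}}\left|\left((\mathbf W\mathbf A)^{k+2}_{j.}(\bar{\mathbf u}^{(k)}_{i.})\right)^{\alpha}_{\alpha}\right|}{\sum_{\alpha\in I_{r,n}}\left|((\mathbf W\mathbf A)^{k+2})^{\alpha}_{\alpha}\right|}, \] where $\bar{\mathbf v}^{(k)}_{.j}$ is the $j$-th column of $(\mathbf A\mathbf W)^{k}\mathbf A$ and $\bar{\mathbf u}^{(k)}_{i.}$ is the $i$-th row of $\mathbf A(\mathbf W\mathbf A)^{k}$.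
   Context: All matrices are complex. For a square $\mathbf M$, $\operatorname{Ind}\mathbf M$ is the smallest nonnegative integer $k$ with $\operatorname{rank}\mathbf M^{k+1}=\operatorname{rank}\mathbf M^{k}$. The $\mathbf W$-weighted Drazin inverse $\mathbf A_{d,W}$ is the unique $\mathbf X\in\mathbb C^{m\times n}$ with $(\mathbf A\mathbf W)^{k+1}\mathbf X\mathbf W=(\mathbf A\mathbf W)^{k}$, $\mathbf X\mathbf W\mathbf A\mathbf W\mathbf X=\mathbf X$, $\mathbf A\mathbf W\mathbf X=\mathbf X\mathbf W\mathbf A$, with $k=\max\{\operatorname{Ind}(\mathbf A\mathbf W),\operatorname{Ind}(\mathbf W\mathbf A)\}$. For a square matrix $\mathbf M$, $\mathbf M_{.i}(\mathbf c)$ (resp. $\mathbf M_{i.}(\mathbf c)$) is obtained from $\mathbf M$ by replacing its $i$-th column (resp. row) by the vector $\mathbf c$. For $1\le k\le p$, $L_{k,p}$ is the set of strictly increasing sequences of $k$ elements of $\{1,\dots,p\}$; $I_{k,p}=J_{k,p}=L_{k,p}$, $I_{k,p}\{i\}=J_{k,p}\{i\}=\{\alpha\in L_{k,p}: i\in\alpha\}$. $\mathbf M^{\alpha}_{\alpha}$ is the principal submatrix indexed by $\alpha$; $|\cdot|$ is the determinant. *)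

(* Defs.v *)
From HB Require Import structures.
From mathcomp Require Import all_boot all_order all_algebra.
From mathcomp Require Import reals.
From mathcomp Require Import complex.
Set Implicit Arguments. Unset Strict Implicit. Unset Printing Implicit Defensive.
Import Order.TTheory GRing.Theory Num.Theory.
Local Open Scope ring_scope.

(* Index of a square matrix: smallest k with rank M^(k+1) = rank M^k.
   Such a k always exists with k <= p, so searching in 0..p is exhaustive. *)
Definition mxind (F : fieldType) (p : nat) (M : 'M[F]_p) : nat :=
  find (fun k => \rank (M ^+ k.+1) == \rank (M ^+ k)) (iota 0 p.+1).

Definition wdind (F : fieldType) (m n : nat) (A : 'M[F]_(m, n)) (W : 'M[F]_(n, m)) : nat :=
  maxn (mxind (A *m W)) (mxind (W *m A)).

Definition is_wdrazin (F : fieldType) (m n : nat) (A : 'M[F]_(m, n)) (W : 'M[F]_(n, m))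
  (X : 'M[F]_(m, n)) : Prop :=
  let k := wdind A W in
  [/\ (A *m W) ^+ k.+1 *m X *m W = (A *m W) ^+ k,
      X *m W *m A *m W *m X = X
    & A *m W *m X = X *m W *m A].

Definition colrep (F : fieldType) (p : nat) (M : 'M[F]_p) (i : 'I_p) (c : 'cV[F]_p) : 'M[F]_p :=
  \matrix_(a, b) (if b == i then c a 0 else M a b).

Definition rowrep (F : fieldType) (p : nat) (M : 'M[F]_p) (i : 'I_p) (c : 'rV[F]_p) : 'M[F]_p :=
  \matrix_(a, b) (if a == i then c 0 b else M a b).

Definition pminor (F : fieldType) (p : nat) (M : 'M[F]_p) (b : {set 'I_p}) : F :=
  \det (\matrix_(s < #|b|, t < #|b|) M (enum_val s) (enum_val t)).

(* Main.v *)
Require Import Defs.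
From HB Require Import structures.
From mathcomp Require Import all_boot all_order all_algebra.
From mathcomp Require Import reals.
From mathcomp Require Import complex.
From mathcomp Require Import fingroup perm.
From mathcomp Require Import ring zify.
Import Order.TTheory GRing.Theory Num.Theory.
Local Open Scope ring_scope.
Set Implicit Arguments. Unset Strict Implicit. Unset Printing Implicit Defensive.

Section Exp.
Variable Rg : comNzRingType.

Lemma splitl m1 m2 (s : 'I_m1) : split (lshift m2 s) = inl s.
Proof. exact: (unsplitK (inl s)). Qed.
Lemma splitr m1 m2 (s : 'I_m2) : split (rshift m1 s) = inr s.
Proof. exact: (unsplitK (inr s)). Qed.

Lemma det_reindex (n n' : nat) (e : n' = n) (K : 'M[Rg]_n) (h : 'I_n' -> 'I_n) :
  injective h -> \det (\matrix_(i, j) K (h i) (h j)) = \det K.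
Proof.
subst n' => hinj.
set s := perm hinj.
have -> : \matrix_(i, j) K (h i) (h j) = row_perm s (col_perm s K).
  by apply/matrixP => i j; rewrite !mxE !permE.
rewrite row_permE col_permE !det_mulmx !det_perm odd_permV.
by rewrite mulrCA -expr2 sqrr_sign mulr1.
Qed.

Definition pmin p (N : 'M[Rg]_p) (b : {set 'I_p}) : Rg :=
  \det (\matrix_(s < #|b|, t < #|b|) N (enum_val s) (enum_val t)).

Lemma pminor_ext p (N : 'M[Rg]_p) (S : {set 'I_p}) :
  \det (\matrix_(a, b) (if a \in S then N a b else (a == b)%:R)) = pmin N S.
Proof.
pose h (i : 'I_(#|S| + #|~: S|)) : 'I_p :=
  match split i with inl s => enum_val s | inr t => enum_val t end.
have hinj : injective h.
  move=> i1 i2; rewrite /h.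
  case: split_ordP => [s1 ->|t1 ->]; case: split_ordP => [s2 ->|t2 ->] e.
  - by rewrite (enum_val_inj e).
  - by have := enum_valP s1; rewrite e; move: (enum_valP t2); rewrite inE => /negbTE ->.
  - by have := enum_valP s2; rewrite -e; move: (enum_valP t1); rewrite inE => /negbTE ->.
  - by rewrite (enum_val_inj e).
have e : (#|S| + #|~: S| = p)%N by rewrite cardsC card_ord.
rewrite -(det_reindex e _ hinj).
rewrite (_ : \matrix_(i, j) _ = block_mx (\matrix_(s < #|S|, t < #|S|) N (enum_val s) (enum_val t))
     (\matrix_(s < #|S|, t < #|~: S|) N (enum_val s) (enum_val t)) 0 1%:M).
  by rewrite det_ublock det1 mulr1.
apply/matrixP => i j.
case: (split_ordP i) => [s ->|t ->]; case: (split_ordP j) => [s' ->|t' ->];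
  rewrite mxE /h ?splitl ?splitr.
- by rewrite block_mxEul !mxE enum_valP.
- by rewrite block_mxEur !mxE enum_valP.
- rewrite block_mxEdl !mxE.
  have := enum_valP t; rewrite inE => /negbTE ->.
  case: eqP => // ee; have := enum_valP s'; rewrite -ee.
  by move: (enum_valP t); rewrite inE => /negbTE ->.
- rewrite block_mxEdr !mxE.
  have := enum_valP t; rewrite inE => /negbTE ->.
  by rewrite (inj_eq enum_val_inj).
Qed.

Lemma det_diag_add p (x : 'I_p -> Rg) (N : 'M[Rg]_p) :
  \det (\matrix_(a, b) ((a == b)%:R * x a + N a b))
  = \sum_(S : {set 'I_p}) (\prod_(a in ~: S) x a) * pmin N S.
Proof.
rewrite (reindex_inj (@setC_inj _)) /=.
under [RHS]eq_bigr => S _ do rewrite setCK -pminor_ext.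
rewrite /determinant.
transitivity (\sum_(s : 'S_p) (-1) ^+ s * \sum_(T : {set 'I_p})
   \prod_a (if a \in T then (a == s a)%:R * x a else N a (s a))).
  apply: eq_bigr => s _; congr (_ * _); rewrite -bigA_distr.
  by apply: eq_bigr => a _; rewrite mxE.
under [LHS]eq_bigr => s _ do rewrite big_distrr /=.
rewrite [LHS]exchange_big /=; apply: eq_bigr => T _.
rewrite big_distrr /=; apply: eq_bigr => s _.
rewrite [X in _ * X = _](bigID (mem T)) [X in _ = _ * (_ * X)](bigID (mem T)) /=.
have e1 : \prod_(a | a \in T) (if a \in T then (a == s a)%:R * x a else N a (s a))
   = \prod_(a in T) (a == s a)%:R * \prod_(a in T) x a.
  by rewrite -big_split; apply: eq_bigr => a ->.
have e2 : \prod_(a | a \notin T) (if a \in T then (a == s a)%:R * x a else N a (s a))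
   = \prod_(a | a \notin T) N a (s a).
  by apply: eq_bigr => a /negbTE ->.
have e3 : \prod_(a | a \in T) (\matrix_(a, b) (if a \in ~: T then N a b else (a == b)%:R)) a (s a)
   = \prod_(a in T) (a == s a)%:R.
  by apply: eq_bigr => a aT; rewrite mxE inE aT.
have e4 : \prod_(a | a \notin T) (\matrix_(a, b) (if a \in ~: T then N a b else (a == b)%:R)) a (s a)
   = \prod_(a | a \notin T) N a (s a).
  by apply: eq_bigr => a aT; rewrite mxE inE aT.
rewrite e1 e2 e3 e4.
by rewrite !mulrA [_ * \prod_(a in T) x a]mulrC -!mulrA mulrCA.
Qed.

End Exp.
Definition colR (T : Type) (p : nat) (M : 'M[T]_p) (i : 'I_p) (c : 'cV[T]_p) : 'M[T]_p :=
  \matrix_(a, b) (if b == i then c a 0 else M a b).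

Section Poly.
Variable F : fieldType.
Local Notation XN N := ('X%:M + map_mx polyC N).

Lemma pmin_map p (N : 'M[F]_p) S : pmin (map_mx polyC N) S = (pminor N S)%:P.
Proof.
rewrite /pmin /pminor -det_map_mx; congr (\det _).
by apply/matrixP => i j; rewrite !mxE.
Qed.

Lemma coef_setsum p (f : {set 'I_p} -> F) (P : pred {set 'I_p}) d :
  (\sum_S (if P S then 'X^#|~: S| else 0) * (f S)%:P)`_d
  = \sum_(S | P S && (#|~: S| == d)) f S.
Proof.
rewrite coef_sum [RHS]big_mkcond /=; apply: eq_bigr => S _.
case: (P S) => /=; last by rewrite mul0r coef0.
by rewrite mulrC coefCM coefXn; case: eqP => [->|]; rewrite ?eqxx ?mulr1 ?mulr0 //; case: eqP => // ->.
Qed.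

Lemma det_XN p (N : 'M[F]_p) :
  \det (XN N) = \sum_S (if predT S then 'X^#|~: S| else 0) * (pminor N S)%:P.
Proof.
rewrite -[\det _](_ : \det (\matrix_(a, b) ((a == b)%:R * 'X + (map_mx polyC N) a b)) = _).
  rewrite det_diag_add; apply: eq_bigr => S _.
  by rewrite pmin_map prodr_const.
by congr (\det _); apply/matrixP => a b; rewrite !mxE mulr_natl.
Qed.

Lemma det_colrep_XN p (N : 'M[F]_p) (a : 'I_p) (v : 'cV[F]_p) :
  \det (colR (XN N) a (map_mx polyC v))
  = \sum_(S : {set 'I_p}) (if a \in S then 'X^#|~: S| else 0) * (pminor (colrep N a v) S)%:P.
Proof.
rewrite -[\det _](_ : \det (\matrix_(c, d) ((c == d)%:R * (if c == a then 0 else 'X)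
      + (map_mx polyC (colrep N a v)) c d)) = _).
  rewrite det_diag_add; apply: eq_bigr => S _.
  rewrite pmin_map; congr (_ * _).
  case: ifP => aS.
    rewrite -prodr_const; apply: eq_bigr => c; rewrite inE.
    by case: eqP => // ->; rewrite aS.
  rewrite (bigD1 a) /=; last by rewrite inE aS.
  by rewrite eqxx mul0r.
congr (\det _); apply/matrixP => c d; rewrite !mxE.
case: (eqVneq d a) => [->|da].
  by case: eqP => _; rewrite ?mulr0 ?mul0r add0r.
case: (eqVneq c d) => [->|cd].
  by rewrite (negbTE da) mul1r mulr1n.
by rewrite mulr0n mul0r.
Qed.

End Poly.
Lemma cramer (Rg : comNzRingType) p (A : 'M[Rg]_p) (a : 'I_p) (v : 'cV[Rg]_p) :
  \det (colR A a v) = (\adj A *m v) a 0.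
Proof.
rewrite (expand_det_col _ a) mxE; apply: eq_bigr => c _.
rewrite !mxE eqxx mulrC; congr (_ * _).
rewrite /cofactor; congr (_ * \det _); apply/matrixP => x z; rewrite !mxE.
by rewrite eq_sym (negbTE (neq_lift a z)).
Qed.

Section Core.
Variable F : fieldType.
Local Notation XN N := ('X%:M + map_mx polyC N).

Definition cf p d (V : 'cV[{poly F}]_p) : 'cV[F]_p := \col_a (V a 0)`_d.

Lemma cf_NP p d (N : 'M[F]_p) V : cf d (map_mx polyC N *m V) = N *m cf d V.
Proof.
apply/matrixP => a z; rewrite !mxE coef_sum; apply: eq_bigr => c _.
by rewrite !mxE coefCM.
Qed.

Lemma cf_X p d (V : 'cV[{poly F}]_p) :
  cf d ('X%:M *m V) = if d is d'.+1 then cf d' V else 0.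
Proof.
rewrite mul_scalar_mx; apply/matrixP => a z; rewrite !mxE coefXM.
by case: d => [|d] //=; rewrite mxE.
Qed.

Lemma cf_scale p d q (w : 'cV[F]_p) : cf d (q *: map_mx polyC w) = q`_d *: w.
Proof. by apply/matrixP => a z; rewrite !mxE coefMC (ord1 z). Qed.

Lemma cf_add p d (V1 V2 : 'cV[{poly F}]_p) : cf d (V1 + V2) = cf d V1 + cf d V2.
Proof. by apply/matrixP => a z; rewrite !mxE coefD. Qed.

Lemma adj_comm p (N : 'M[F]_p) :
  \adj (XN N) *m map_mx polyC N = map_mx polyC N *m \adj (XN N).
Proof.
have := mul_adj_mx (XN N); rewrite -(mul_mx_adj (XN N)).
rewrite mulmxDr mulmxDl scalar_mxC.
by move/addrI.
Qed.

Lemma sylv p r (C : 'M[F]_(p, r)) (Rm : 'M[F]_(r, p)) :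
  'X^r * \det (XN (C *m Rm)) = 'X^p * \det (XN (Rm *m C)).
Proof.
set CP := map_mx polyC C; set RP := map_mx polyC Rm.
pose Z : 'M[{poly F}]_(p + r) := block_mx ('X%:M) (- CP) RP 1%:M.
pose L1 : 'M[{poly F}]_(p + r) := block_mx 1%:M CP 0 1%:M.
pose L2 : 'M[{poly F}]_(p + r) := block_mx 1%:M 0 (- RP) ('X%:M).
have e1 : L1 *m Z = block_mx (XN (C *m Rm)) 0 RP 1%:M.
  by rewrite mulmx_block !mul1mx !mul0mx !mulmx1 addNr !add0r map_mxM.
have e2 : L2 *m Z = block_mx ('X%:M) (- CP) 0 (XN (Rm *m C)).
  rewrite mulmx_block !mul1mx !mul0mx !mulmx1 !addr0 map_mxM.
  by rewrite !mulNmx !mulmxN opprK scalar_mxC addNr addrC.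
have d1 : \det L1 = 1 by rewrite det_ublock !det1 mulr1.
have d2 : \det L2 = 'X^r by rewrite det_lblock det1 det_scalar mul1r.
have := congr1 determinant e1; rewrite det_mulmx d1 mul1r det_lblock det1 mulr1 => <-.
have := congr1 determinant e2; rewrite det_mulmx d2 det_ublock det_scalar => ->.
done.
Qed.

End Core.
Section GL.
Variable F : fieldType.
Local Notation XN N := ('X%:M + map_mx polyC N).

Lemma rank_mxsub m n m' n' (f : 'I_m' -> 'I_m) (g : 'I_n' -> 'I_n) (A : 'M[F]_(m, n)) :
  (\rank (mxsub f g A) <= \rank A)%N.
Proof.
have -> : mxsub f g A = mxsub f id 1%:M *m (mxsub g id A^T)^T.
  rewrite -rowsubE; apply/matrixP => i j; rewrite !mxE.
  done.
apply: leq_trans (mxrankM_maxr _ _) _.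
by rewrite mxrank_tr rowsubE (leq_trans (mxrankM_maxr _ _)) // mxrank_tr.
Qed.

Lemma pminor_rank0 p (K : 'M[F]_p) (S : {set 'I_p}) :
  (\rank K < #|S|)%N -> pminor K S = 0.
Proof.
move=> hK; apply/eqP; rewrite -[_ == 0]negbK -unitfE -unitmxE -row_free_unit /row_free.
apply/negP => /eqP e.
have := rank_mxsub (@enum_val _ (mem S)) (@enum_val _ (mem S)) K.
rewrite /mxsub e => h.
by have := leq_ltn_trans h hK; rewrite ltnn.
Qed.

Lemma colrep_mul p (N : 'M[F]_p) (a : 'I_p) (y : 'cV[F]_p) :
  colrep N a (N *m y) = N *m colrep 1%:M a y.
Proof.
apply/matrixP => c d; rewrite /colrep !mxE; case: eqP => [->|/eqP da].
  by apply: eq_bigr => e _; rewrite !mxE eqxx.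
rewrite (bigD1 d) //= big1 ?addr0; first by rewrite !mxE (negbTE da) eqxx mulr1n mulr1.
by move=> e /negbTE ed; rewrite !mxE (negbTE da) ed mulr0n mulr0.
Qed.

Lemma cardsC' p (S : {set 'I_p}) : #|~: S| = (p - #|S|)%N.
Proof. have := cardsC S; rewrite card_ord; lia. Qed.

Lemma card_le p (S : {set 'I_p}) : (#|S| <= p)%N.
Proof. by have := max_card (mem S); rewrite card_ord. Qed.

Lemma GL p (N : 'M[F]_p) (y : 'cV[F]_p) :
  let r := \rank N in
  let c := \sum_(S : {set 'I_p} | #|S| == r) pminor N S in
  let x := \col_(a < p) \sum_(S : {set 'I_p} | (#|S| == r) && (a \in S))
              pminor (colrep N a (N *m y)) S in
  \rank (N *m N) = \rank N ->
  [/\ c != 0, N *m x = c *: (N *m y) & exists z, x = N *m z].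
Proof.
move=> r c x hNN.
set b := N *m y.
set AP := XN N.
set U := \adj AP *m map_mx polyC b.
have hr : (r <= p)%N := rank_leq_row N.
have cfU d : cf d U = \col_a \sum_(S : {set 'I_p} | (a \in S) && (#|~: S| == d)) pminor (colrep N a b) S.
  apply/matrixP => a z; rewrite [LHS]mxE [RHS]mxE /U -cramer det_colrep_XN coef_setsum.
  done.
have ex : x = cf (p - r) U.
  rewrite cfU; apply/matrixP => a z; rewrite !mxE; apply: eq_bigl => S.
  rewrite andbC cardsC'; congr (_ && _).
  apply/eqP/eqP => [->//|e]. have := card_le S. lia.
have eqU : AP *m U = \det AP *: map_mx polyC b.
  by rewrite /U mulmxA mul_mx_adj mul_scalar_mx.
have eqc : (\det AP)`_(p - r) = c.
  rewrite det_XN (coef_setsum _ predT); apply: eq_bigl => S /=.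
  rewrite cardsC'; apply/eqP/eqP => [e|->//]. have := card_le S. move: hr e. rewrite /r. set s := #|S|; set q := \rank N. move=> h1 h2 h3; have h2' : (p - s = p - q)%N := h2; apply: (_ : s = q :> nat); lia.
have X0 : cf (p - r) ('X%:M *m U) = 0.
  rewrite cf_X; case E : (p - r)%N => [|d] //.
  rewrite cfU; apply/matrixP => a z; rewrite !mxE big1 // => S /andP [_ /eqP hS].
  apply: pminor_rank0; rewrite colrep_mul.
  apply: leq_ltn_trans (mxrankM_maxl _ _) _.
  have := card_le S; rewrite cardsC' in hS. rewrite -/r. lia.
split.
- rewrite -eqc.
  have sy := sylv (col_base N) (row_base N); rewrite mulmx_base in sy.
  have := congr1 (fun q : {poly F} => q`_p) sy; rewrite /= !coefXnM ltnn subnn.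
  rewrite ltnNge hr /= => ->.
  have -> : XN (row_base N *m col_base N) = char_poly_mx (- (row_base N *m col_base N)).
    by rewrite /char_poly_mx map_mxN opprK.
  rewrite char_poly_det mulf_neq0 ?signr_eq0 // -scaleN1r detZ mulf_neq0 ?signr_eq0 //.
  rewrite -unitfE -unitmxE -row_free_unit /row_free eqn_leq rank_leq_row /=.
  have e : N *m N = col_base N *m (row_base N *m col_base N) *m row_base N.
    by rewrite -[LHS](congr2 mulmx (mulmx_base N) (mulmx_base N)) !mulmxA.
  rewrite -[X in (X <= _)%N]hNN e.
  exact: leq_trans (mxrankM_maxl _ _) (mxrankM_maxr _ _).
- have := congr1 (cf (p - r)) eqU.
  by rewrite cf_scale eqc /AP mulmxDl cf_add X0 add0r cf_NP -ex.
- exists (cf (p - r) (\adj AP *m map_mx polyC y)).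
  by rewrite ex /U /b map_mxM mulmxA adj_comm -mulmxA cf_NP.
Qed.

End GL.
Section Ind.
Variable F : fieldType.

Lemma rank_powS p (M : 'M[F]_p) k : (\rank (M ^+ k.+1) <= \rank (M ^+ k))%N.
Proof. by rewrite exprSr -mulmxE mxrankM_maxl. Qed.

Lemma mxind_stab p (M : 'M[F]_p) :
  \rank (M ^+ (mxind M).+1) = \rank (M ^+ mxind M).
Proof.
rewrite /mxind.
set P := fun k => _.
have hP : has P (iota 0 p.+1).
  apply/negPn/negP => /hasPn hn.
  suff : forall j, (j <= p.+1)%N -> (\rank (M ^+ j) + j <= p)%N.
    by move/(_ p.+1 (leqnn _)); rewrite addnS ltnNge leq_addl.
  elim => [|j IH] hj; first by rewrite expr0 addn0 mxrank1.
  have := hn j; rewrite mem_iota /= add0n => /(_ hj) /eqP hne.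
  have := rank_powS M j; move/eqP: hne.
  have := IH (ltnW hj). lia.
have := nth_find 0 hP; rewrite nth_iota; last by move: hP; rewrite has_find size_iota.
by rewrite add0n => /eqP.
Qed.
Section Stab.
Variables (p : nat) (M : 'M[F]_p).

Lemma powSl a : M ^+ a.+1 = M *m M ^+ a.
Proof. by rewrite exprS mulmxE. Qed.
Lemma powSr a : M ^+ a.+1 = M ^+ a *m M.
Proof. by rewrite exprSr mulmxE. Qed.
Lemma powD a b : M ^+ (a + b) = M ^+ a *m M ^+ b.
Proof. by rewrite exprD mulmxE. Qed.

Lemma step a : \rank (M ^+ a.+1) = \rank (M ^+ a) -> \rank (M ^+ a.+2) = \rank (M ^+ a.+1).
Proof.
move=> e.
have s1 : (M ^+ a.+1 <= M ^+ a)%MS by rewrite powSl submxMl.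
have s2 : (M ^+ a <= M ^+ a.+1)%MS by rewrite -(mxrank_leqif_sup s1).2 e.
have eAB : (M ^+ a.+1 :=: M ^+ a)%MS by apply/eqmxP; rewrite s1 s2.
by rewrite [in LHS](powSr a.+1) (eqmxMr M eAB) -powSr.
Qed.

Lemma stabS k : (mxind M <= k)%N -> \rank (M ^+ k.+1) = \rank (M ^+ k).
Proof.
move=> hk; rewrite -(subnKC hk); elim: (k - mxind M)%N => [|i IH].
  by rewrite addn0 mxind_stab.
by rewrite addnS; apply: step.
Qed.

Lemma stab_rank k j : (mxind M <= k)%N -> \rank (M ^+ (k + j)) = \rank (M ^+ k).
Proof.
move=> hk; elim: j => [|j IH]; first by rewrite addn0.
by rewrite addnS stabS ?IH // (leq_trans hk) ?leq_addr.
Qed.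

Lemma stab_row k j : (mxind M <= k)%N -> (M ^+ k <= M ^+ (k + j))%MS.
Proof.
move=> hk.
have s1 : (M ^+ (k + j) <= M ^+ k)%MS by rewrite addnC powD submxMl.
by rewrite -(mxrank_leqif_sup s1).2 stab_rank.
Qed.

Lemma stab_col k j : (mxind M <= k)%N -> ((M ^+ k)^T <= (M ^+ (k + j))^T)%MS.
Proof.
move=> hk.
have s1 : ((M ^+ (k + j))^T <= (M ^+ k)^T)%MS by rewrite powD trmx_mul submxMl.
by rewrite -(mxrank_leqif_sup s1).2 !mxrank_tr stab_rank.
Qed.

Lemma uniqL k j q (Z : 'M[F]_(p, q)) : (mxind M <= k)%N ->
  M ^+ (k + j) *m Z = 0 -> M ^+ k *m Z = 0.
Proof.
by move=> hk e; case/submxP: (stab_row j hk) => D ->; rewrite -mulmxA e mulmx0.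
Qed.

Lemma uniqR k j q (Z : 'M[F]_(q, p)) : (mxind M <= k)%N ->
  Z *m M ^+ (k + j) = 0 -> Z *m M ^+ k = 0.
Proof.
move=> hk e; case/submxP: (stab_col j hk) => D eD.
have -> : M ^+ k = M ^+ (k + j) *m D^T by rewrite -[LHS]trmxK eD trmx_mul trmxK.
by rewrite mulmxA e mul0mx.
Qed.

Lemma colsp k j : (mxind M <= k)%N -> exists D : 'M_p, M ^+ k = M ^+ (k + j) *m D.
Proof.
move=> hk; case/submxP: (stab_col j hk) => D eD.
by exists D^T; rewrite -[LHS]trmxK eD trmx_mul trmxK.
Qed.

Lemma rowsp k j : (mxind M <= k)%N -> exists D : 'M_p, M ^+ k = D *m M ^+ (k + j).
Proof. by move=> hk; case/submxP: (stab_row j hk) => D eD; exists D. Qed.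

End Stab.
End Ind.
Section Alg.
Variable F : fieldType.

Lemma col_mul m n q (j : 'I_q) (A : 'M[F]_(m, n)) (B : 'M[F]_(n, q)) :
  col j (A *m B) = A *m col j B.
Proof. by rewrite !colE mulmxA. Qed.

Lemma pw_gen m n (A : 'M[F]_(m, n)) (W : 'M[F]_(n, m)) j :
  (A *m W) ^+ j.+1 = A *m (W *m A) ^+ j *m W.
Proof.
elim: j => [|j IH]; first by rewrite expr1 expr0 mulmx1.
by rewrite powSl IH (powSl (W *m A)) !mulmxA.
Qed.

Lemma MA_gen m n (A : 'M[F]_(m, n)) (W : 'M[F]_(n, m)) j :
  (A *m W) ^+ j *m A = A *m (W *m A) ^+ j.
Proof.
elim: j => [|j IH]; first by rewrite !expr0 mul1mx mulmx1.
by rewrite powSr (powSr (W *m A)) [RHS]mulmxA -IH !mulmxA.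
Qed.

Lemma kill p (M : 'M[F]_p) k j q (Z D : 'M[F]_(p, q)) : (mxind M <= k)%N ->
  D = M ^+ k *m Z -> M ^+ j *m D = 0 -> D = 0.
Proof.
move=> hk -> e; apply: (uniqL (j := j)) hk _.
by rewrite addnC powD -mulmxA.
Qed.

Lemma killR p (M : 'M[F]_p) k j q (Z D : 'M[F]_(q, p)) : (mxind M <= k)%N ->
  D = Z *m M ^+ k -> D *m M ^+ j = 0 -> D = 0.
Proof.
move=> hk -> e; apply: (uniqR (j := j)) hk _.
by rewrite powD mulmxA.
Qed.

Lemma iter_sand p q (B : 'M[F]_p) (C : 'M[F]_q) (X : 'M[F]_(p, q)) :
  X = B *m X *m C -> forall j, X = B ^+ j *m X *m C ^+ j.
Proof.
move=> e; elim => [|j IH]; first by rewrite !expr0 mul1mx mulmx1.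
by rewrite {1}IH {1}e powSr powSl !mulmxA.
Qed.

Section Char.
Variables (m n : nat) (A : 'M[F]_(m, n)) (W : 'M[F]_(n, m)).
Local Notation M := (A *m W).
Local Notation Q := (W *m A).
Local Notation k := (wdind A W).

Lemma hkM : (mxind M <= k)%N. Proof. exact: leq_maxl. Qed.
Lemma hkQ : (mxind Q <= k)%N. Proof. exact: leq_maxr. Qed.

Lemma from_char X : M ^+ k.+2 *m X = M ^+ k *m A ->
  (exists Y, X = M ^+ k *m Y) -> is_wdrazin A W X.
Proof.
move=> hX [Y hY]; rewrite /is_wdrazin.
have e1 : M ^+ k.+1 *m X *m W = M ^+ k.
  apply/eqP; rewrite -subr_eq0; apply/eqP.
  apply: (kill (j := 1) (Z := M *m X *m W - 1%:M) hkM).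
    by rewrite mulmxBr mulmx1; congr (_ - _); rewrite powSr !mulmxA.
  by rewrite expr1 mulmxBr !mulmxA -!powSl hX powSr mulmxA subrr.
have e3 : M *m X = X *m W *m A.
  apply/eqP; rewrite -subr_eq0; apply/eqP.
  apply: (kill (j := k.+1) (Z := M *m Y - Y *m W *m A) hkM).
    by rewrite hY mulmxBr !mulmxA -powSl powSr !mulmxA.
  by rewrite mulmxBr (mulmxA _ M X) -powSr hX !mulmxA e1 subrr.
split => //.
apply/eqP; rewrite -subr_eq0; apply/eqP.
apply: (kill (j := k.+1) (Z := Y *m W *m A *m W *m X - Y) hkM).
  by rewrite mulmxBr !mulmxA -hY.
by rewrite mulmxBr !mulmxA e1 powSr !mulmxA subrr.
Qed.

Lemma to_char X : is_wdrazin A W X ->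
  [/\ M ^+ k.+2 *m X = M ^+ k *m A, exists Y, X = M ^+ k *m Y,
      X *m Q ^+ k.+2 = A *m Q ^+ k & exists Y, X = Y *m Q ^+ k].
Proof.
case => e1 e2 e3.
have eX : X = M *m X *m (W *m X) by rewrite mulmxA e3 e2.
have eX' : X = X *m W *m X *m Q.
  have : X *m W *m (X *m W *m A) = X by rewrite -e3 !mulmxA e2.
  by rewrite !mulmxA.
have XQ j : X *m Q ^+ j = M ^+ j *m X.
  elim: j => [|j IH]; first by rewrite !expr0 mul1mx mulmx1.
  rewrite powSr mulmxA IH -mulmxA (mulmxA X W A) -e3 mulmxA -powSr.
  done.
have NX : M ^+ k.+2 *m X = M ^+ k *m A.
  by rewrite powSr -mulmxA e3 !mulmxA e1.
split => //.
- exists (X *m (W *m X) ^+ k); by rewrite mulmxA -iter_sand.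
- by rewrite XQ NX MA_gen.
- exists ((X *m W) ^+ k *m X); by rewrite -iter_sand // -mulmxA.
Qed.

End Char.
End Alg.
Section Main.
Variable F : fieldType.

Lemma pminor_tr p (K : 'M[F]_p) S : pminor K^T S = pminor K S.
Proof.
rewrite /pminor -det_tr; congr (\det _); apply/matrixP => s t; rewrite !mxE.
done.
Qed.

Lemma pminor_rowrep p (K : 'M[F]_p) (j : 'I_p) (w : 'rV[F]_p) S :
  pminor (colrep K^T j w^T) S = pminor (rowrep K j w) S.
Proof.
rewrite /pminor -det_tr; congr (\det _); apply/matrixP => s t; rewrite /colrep /rowrep !mxE.
done.
Qed.

Lemma GL' p (N : 'M[F]_p) (y : 'cV[F]_p) r0 :
  \rank (N *m N) = \rank N -> \rank N = r0 ->
  [/\ (\sum_(S : {set 'I_p} | #|S| == r0) pminor N S) != 0,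
      forall i, \sum_l N i l * (\sum_(S : {set 'I_p} | (#|S| == r0) && (l \in S))
              pminor (colrep N l (N *m y)) S)
      = (\sum_(S : {set 'I_p} | #|S| == r0) pminor N S) * (N *m y) i 0
    & exists z : 'cV_p, forall a, \sum_(S : {set 'I_p} | (#|S| == r0) && (a \in S))
              pminor (colrep N a (N *m y)) S = (N *m z) a 0].
Proof.
move=> h <-; have [cnz Nx [z xz]] := GL y h; split => //.
  move=> i; have := congr1 (fun v : 'cV_p => v i 0) Nx; rewrite /= [X in _ = X]mxE => <-.
  by rewrite mxE; apply: eq_bigr => l _; rewrite mxE.
by exists z => a; rewrite -xz mxE.
Qed.

Lemma GLT p (K : 'M[F]_p) (y : 'cV[F]_p) (w : 'rV[F]_p) r0 :
  \rank (K^T *m K^T) = \rank K^T -> \rank K^T = r0 -> K^T *m y = w^T ->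
  [/\ (\sum_(S : {set 'I_p} | #|S| == r0) pminor K S) != 0,
      forall j, \sum_l (\sum_(S : {set 'I_p} | (#|S| == r0) && (l \in S))
              pminor (rowrep K l w) S) * K l j
      = (\sum_(S : {set 'I_p} | #|S| == r0) pminor K S) * w 0 j
    & exists z : 'rV_p, forall a, \sum_(S : {set 'I_p} | (#|S| == r0) && (a \in S))
              pminor (rowrep K a w) S = (z *m K) 0 a].
Proof.
move=> h1 h2 hw; have [cnz Nx [z xz]] := GL' y h1 h2.
rewrite hw in Nx xz.
have ec : \sum_(S : {set 'I_p} | #|S| == r0) pminor K^T S
          = \sum_(S : {set 'I_p} | #|S| == r0) pminor K S.
  by apply: eq_bigr => S _; rewrite pminor_tr.
have en a : \sum_(S : {set 'I_p} | (#|S| == r0) && (a \in S)) pminor (colrep K^T a w^T) S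
          = \sum_(S : {set 'I_p} | (#|S| == r0) && (a \in S)) pminor (rowrep K a w) S.
  by apply: eq_bigr => S _; rewrite pminor_rowrep.
split.
- by rewrite -ec.
- move=> j; have := Nx j; rewrite ec mxE => <-.
  by apply: eq_bigr => l _; rewrite en mxE mulrC.
- exists z^T => a; rewrite -en xz !mxE; apply: eq_bigr => l _; rewrite !mxE mulrC.
  done.
Qed.

Theorem main_gen (m n : nat) (A : 'M[F]_(m, n)) (W : 'M[F]_(n, m)) :
  let k := wdind A W in
  let r := \rank ((A *m W) ^+ k) in
  (exists X, is_wdrazin A W X) /\
  forall X : 'M[F]_(m, n), is_wdrazin A W X ->
  forall (i : 'I_m) (j : 'I_n),
    X i j =
      (\sum_(b : {set 'I_m} | (#|b| == r) && (i \in b))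
          pminor (colrep ((A *m W) ^+ k.+2) i (col j ((A *m W) ^+ k *m A))) b)
      / (\sum_(b : {set 'I_m} | #|b| == r) pminor ((A *m W) ^+ k.+2) b)
    /\
    X i j =
      (\sum_(a : {set 'I_n} | (#|a| == r) && (j \in a))
          pminor (rowrep ((W *m A) ^+ k.+2) j (row i (A *m (W *m A) ^+ k))) a)
      / (\sum_(a : {set 'I_n} | #|a| == r) pminor ((W *m A) ^+ k.+2) a).
Proof.
move=> k r.
have hM : (mxind (A *m W) <= k)%N := hkM A W.
have hQ : (mxind (W *m A) <= k)%N := hkQ A W.
have rM2 : \rank ((A *m W) ^+ k.+2) = r by rewrite -addn2 stab_rank.
have rM1 : \rank ((A *m W) ^+ k.+1) = r by rewrite -addn1 stab_rank.
have rQ2 : \rank ((W *m A) ^+ k.+2) = \rank ((W *m A) ^+ k) by rewrite -addn2 stab_rank.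
have rQ1 : \rank ((W *m A) ^+ k.+1) = \rank ((W *m A) ^+ k) by rewrite -addn1 stab_rank.
have rQM : \rank ((W *m A) ^+ k) = r.
  apply/eqP; rewrite eqn_leq; apply/andP; split.
    rewrite -rQ2 (pw_gen W A k.+1) -rM1.
    exact: leq_trans (mxrankM_maxl _ _) (mxrankM_maxr _ _).
  rewrite -rM2 (pw_gen A W k.+1) -rQ1.
  exact: leq_trans (mxrankM_maxl _ _) (mxrankM_maxr _ _).
have hNN : \rank ((A *m W) ^+ k.+2 *m (A *m W) ^+ k.+2) = \rank ((A *m W) ^+ k.+2).
  rewrite -powD (_ : (k.+2 + k.+2 = k + k.+4)%N); last lia.
  by rewrite stab_rank // -addn2 stab_rank.
have hNN' : \rank (((W *m A) ^+ k.+2)^T *m ((W *m A) ^+ k.+2)^T)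
            = \rank (((W *m A) ^+ k.+2)^T).
  rewrite -trmx_mul !mxrank_tr -powD (_ : (k.+2 + k.+2 = k + k.+4)%N); last lia.
  by rewrite stab_rank // -addn2 stab_rank.
have rN' : \rank (((W *m A) ^+ k.+2)^T) = r by rewrite mxrank_tr rQ2.
have [D hD] := colsp 2 hM; rewrite addn2 in hD.
pose y (j : 'I_n) := D *m col j A.
have NY j : (A *m W) ^+ k.+2 *m y j = col j ((A *m W) ^+ k *m A).
  by rewrite /y mulmxA -hD col_mul.
set c0 := \sum_(b : {set 'I_m} | #|b| == r) pminor ((A *m W) ^+ k.+2) b.
pose X0 := \matrix_(i, j) ((\sum_(b : {set 'I_m} | (#|b| == r) && (i \in b))
          pminor (colrep ((A *m W) ^+ k.+2) i (col j ((A *m W) ^+ k *m A))) b) / c0).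
have [c0nz _ _] := GL' (0 : 'cV_m) hNN rM2.
have E1 : (A *m W) ^+ k.+2 *m X0 = (A *m W) ^+ k *m A.
  apply/matrixP => i j.
  have [_ Nx _] := GL' (y j) hNN rM2.
  rewrite NY in Nx.
  rewrite mxE /X0; under eq_bigr => l _ do rewrite mxE mulrA.
  by rewrite -big_distrl /= Nx -/c0 mulrAC divff // mul1r !mxE.
have E2 : exists Y, X0 = (A *m W) ^+ k *m Y.
  have hz j : exists z : 'cV_m, forall a,
      \sum_(b : {set 'I_m} | (#|b| == r) && (a \in b))
          pminor (colrep ((A *m W) ^+ k.+2) a (col j ((A *m W) ^+ k *m A))) b
      = ((A *m W) ^+ k.+2 *m z) a 0.
    by have [_ _ [z hz]] := GL' (y j) hNN rM2; exists z; rewrite -NY.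
  have [zf hzf] := fin_all_exists hz.
  exists ((A *m W) ^+ 2 *m \matrix_(l, j) (zf j l 0 / c0)).
  rewrite mulmxA -powD addn2; apply/matrixP => i j.
  rewrite /X0 !mxE hzf mxE; under [RHS]eq_bigr => l _ do rewrite mxE mulrA.
  by rewrite big_distrl.
have [D' hD'] := rowsp 2 hQ; rewrite addn2 in hD'.
pose y' (i : 'I_m) := D'^T *m (row i A)^T.
have NY' i : ((W *m A) ^+ k.+2)^T *m y' i = (row i (A *m (W *m A) ^+ k))^T.
  by rewrite /y' -trmx_mul -trmx_mul -mulmxA -hD' row_mul.
set c1 := \sum_(a : {set 'I_n} | #|a| == r) pminor ((W *m A) ^+ k.+2) a.
pose X1 := \matrix_(i, j) ((\sum_(a : {set 'I_n} | (#|a| == r) && (j \in a))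
          pminor (rowrep ((W *m A) ^+ k.+2) j (row i (A *m (W *m A) ^+ k))) a) / c1).
have h0 : ((W *m A) ^+ k.+2)^T *m (0 : 'cV_n) = (0 : 'rV_n)^T by rewrite mulmx0 trmx0.
have [c1nz _ _] := GLT hNN' rN' h0.
have E1' : X1 *m (W *m A) ^+ k.+2 = A *m (W *m A) ^+ k.
  apply/matrixP => i j.
  have [_ Nx _] := GLT hNN' rN' (NY' i).
  rewrite mxE /X1; under eq_bigr => l _ do rewrite mxE mulrAC.
  by rewrite -big_distrl /= Nx -/c1 mulrAC divff // mul1r !mxE.
have E2' : exists Y, X1 = Y *m (W *m A) ^+ k.
  have hz i : exists z : 'rV_n, forall a,
      \sum_(b : {set 'I_n} | (#|b| == r) && (a \in b))
          pminor (rowrep ((W *m A) ^+ k.+2) a (row i (A *m (W *m A) ^+ k))) b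
      = (z *m (W *m A) ^+ k.+2) 0 a.
    by have [_ _ [z hz]] := GLT hNN' rN' (NY' i); exists z.
  have [zf hzf] := fin_all_exists hz.
  exists (\matrix_(i, l) (zf i 0 l / c1) *m (W *m A) ^+ 2).
  rewrite -mulmxA -powD add2n; apply/matrixP => i j.
  rewrite /X1 !mxE hzf mxE; under [RHS]eq_bigr => l _ do rewrite mxE mulrAC.
  by rewrite big_distrl.
split.
  by exists X0; apply: from_char.
move=> X hX i j.
have [NX [Y hY] XQ [Y' hY']] := to_char hX.
have [Y0 hY0] := E2; have [Y1 hY1] := E2'.
have eX : X = X0.
  apply/eqP; rewrite -subr_eq0; apply/eqP.
  apply: (kill (j := k.+2) (Z := Y - Y0) hM); first by rewrite mulmxBr -hY -hY0.
  by rewrite mulmxBr NX E1 subrr.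
have eX1 : X = X1.
  apply/eqP; rewrite -subr_eq0; apply/eqP.
  apply: (killR (j := k.+2) (Z := Y' - Y1) hQ); first by rewrite mulmxBl -hY' -hY1.
  by rewrite mulmxBl XQ E1' subrr.
by split; [rewrite eX mxE | rewrite eX1 mxE].
Qed.

End Main.

Theorem theorem2p8 (R : realType) (m n : nat)
  (A : 'M[R[i]]_(m, n)) (W : 'M[R[i]]_(n, m)) :
  let k := wdind A W in
  let r := \rank ((A *m W) ^+ k) in
  (exists X, is_wdrazin A W X) /\
  forall X : 'M[R[i]]_(m, n), is_wdrazin A W X ->
  forall (i : 'I_m) (j : 'I_n),
    X i j =
      (\sum_(b : {set 'I_m} | (#|b| == r) && (i \in b))
          pminor (colrep ((A *m W) ^+ k.+2) i (col j ((A *m W) ^+ k *m A))) b)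
      / (\sum_(b : {set 'I_m} | #|b| == r) pminor ((A *m W) ^+ k.+2) b)
    /\
    X i j =
      (\sum_(a : {set 'I_n} | (#|a| == r) && (j \in a))
          pminor (rowrep ((W *m A) ^+ k.+2) j (row i (A *m (W *m A) ^+ k))) a)
      / (\sum_(a : {set 'I_n} | #|a| == r) pminor ((W *m A) ^+ k.+2) a).
Proof. exact: main_gen. Qed.
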